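(* Let $\mathbb{K}$ be a field, $\theta=(\{X_t\}_{t\in G},\{h_t\}_{t\in G})$ a free partial action of a group $G$ on a set $X$, and $\alpha=(\{\mathcal{F}_0(X_t)\}_{t\in G},\{\alpha_t\}_{t\in G})$ the associated partial action on $\mathcal{F}_0(X)$, $\alpha_t(f)=f\circ h_{t^{-1}}$. Let $R=\{(x,h_t(x)): t\in G,\ x\in X_{t^{-1}}\}$ and let $\mathcal{F}_0(R)$ be the space of finitely supported functions $R\to\mathbb{K}$ with pointwise linear operations and product $$(f*g)(x,h_t(x))=\sum_{s\in G,\ x\in X_{s^{-1}}} f(x,h_s(x))\,g(h_s(x),h_t(x)).$$ Then the algebras $\mathcal{F}_0(R)$ and $\mathcal{F}_0(X)\rtimes_\alpha G$ are isomorphic.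
   Context: $\mathcal{F}_0(X)$ is the $\mathbb{K}$-algebra of finitely supported functions $X\to\mathbb{K}$ with pointwise operations; $\mathcal{F}_0(X_t)=\{f\in\mathcal{F}_0(X): f=0 \text{ off } X_t\}$. A partial action of $G$ on a set $X$: subsets $X_t$, bijections $h_t:X_{t^{-1}}\to X_t$, $X_e=X$, $h_e=\mathrm{id}$, $h_t(X_{t^{-1}}\cap X_s)=X_t\cap X_{ts}$, $h_th_s=h_{ts}$ on $X_{s^{-1}}\cap X_{s^{-1}t^{-1}}$; free means $h_t(x)=x$ implies $t=e$. The partial skew group ring $\mathcal{F}_0(X)\rtimes_\alpha G$ is the set of finite formal sums $\sum_t a_t\delta_t$ with $a_t\in\mathcal{F}_0(X_t)$, usual addition, and multiplication determined by $(a_t\delta_t)(b_s\delta_s)=\alpha_t(\alpha_{t^{-1}}(a_t)b_s)\delta_{ts}$. *)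

(* Defs.v *)
From HB Require Import structures.
From mathcomp Require Import all_boot all_order all_algebra.
From mathcomp Require Import boolp classical_sets functions cardinality fsbigop.
Set Implicit Arguments. Unset Strict Implicit. Unset Printing Implicit Defensive.
Import Order.TTheory GRing.Theory Num.Theory.
Local Open Scope classical_set_scope.
Local Open Scope ring_scope.

(* The carrier is a
   choiceType (harmless classically) so that finitely supported sums
   over it can be formed with mathcomp-analysis' \sum_(i \in A). *)
Record group := Group {
  gcar :> choiceType;
  gmul : gcar -> gcar -> gcar;
  ginv : gcar -> gcar;
  gone : gcar;
  gmulA : forall a b c, gmul a (gmul b c) = gmul (gmul a b) c;
  gmul1 : forall a, gmul gone a = a;
  gmulV : forall a, gmul (ginv a) a = gone
}.

(* Partial action theta = ({X_t}, {h_t}) of G on X.  h t is a total map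
   X -> X of which only the restriction X_{t^-1} -> X_t matters. *)
Definition partial_action (G : group) (X : Type)
    (D : G -> set X) (h : G -> X -> X) : Prop :=
  [/\
      (forall t, set_bij (D (ginv t)) (D t) (h t)),
      D (gone G) = setT,
      (forall x, h (gone G) x = x),
      (forall t s, h t @` (D (ginv t) `&` D s) = D t `&` D (gmul t s)) &
      (forall t s x, D (ginv s) x -> D (gmul (ginv s) (ginv t)) x ->
         h t (h s x) = h (gmul t s) x)].

Definition free_action (G : group) (X : Type)
    (D : G -> set X) (h : G -> X -> X) : Prop :=
  forall t x, D (ginv t) x -> h t x = x -> t = gone G.

Section Algebras.
Variables (K : fieldType) (G : group) (X : choiceType)
          (D : G -> set X) (h : G -> X -> X).

Definition fin_supp (T : Type) (f : T -> K) := finite_set [set x | f x != 0].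

Definition F0_on (t : G) (f : X -> K) :=
  fin_supp f /\ (forall x, f x != 0 -> D t x).

Definition alpha (t : G) (f : X -> K) : X -> K :=
  fun y => if `[< D t y >] then f (h (ginv t) y) else 0.

(* ---- the partial skew group ring F_0(X) x|_alpha G ----
   sum_t a_t delta_t  is represented by  a : G -> X -> K  *)
Definition skew_elt (a : G -> X -> K) :=
  finite_set [set t | exists x, a t x != 0] /\ (forall t, F0_on t (a t)).

Definition skew_add (a b : G -> X -> K) := fun t x => a t x + b t x.
Definition skew_scale (k : K) (a : G -> X -> K) := fun t x => k * a t x.

(* (a_t delta_t)(b_s delta_s) = alpha_t(alpha_{t^-1}(a_t) b_s) delta_{ts},
   extended bilinearly *)
Definition skew_mul (a b : G -> X -> K) : G -> X -> K :=
  fun u x => \sum_(t \in [set: G]) \sum_(s \in [set s | gmul t s = u])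
     alpha t (fun z => alpha (ginv t) (a t) z * b s z) x.

Definition Rel : set (X * X) :=
  [set p | exists t, D (ginv t) p.1 /\ p.2 = h t p.1].

(* finitely supported functions on R, viewed as functions X*X -> K vanishing off R *)
Definition F0R_elt (f : X * X -> K) :=
  fin_supp f /\ (forall p, f p != 0 -> Rel p).

Definition F0R_add (f g : X * X -> K) := fun p => f p + g p.
Definition F0R_scale (k : K) (f : X * X -> K) := fun p => k * f p.

Definition F0R_mul (f g : X * X -> K) : X * X -> K :=
  fun p => if `[< Rel p >] then
     \sum_(s \in [set s | D (ginv s) p.1])
        f (p.1, h s p.1) * g (h s p.1, p.2)
   else 0.

End Algebras.

(* Main.v *)
Require Import Defs.
From HB Require Import structures.
From mathcomp Require Import all_boot all_order all_algebra.
From mathcomp Require Import boolp classical_sets functions cardinality fsbigop.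
Local Open Scope classical_set_scope.
Local Open Scope ring_scope.
Set Implicit Arguments. Unset Strict Implicit.
Import GRing.Theory.

Section GroupFacts.
Variable G : group.
Implicit Types a b c : G.
Local Notation "a ** b" := (gmul a b) (at level 40).

Lemma gmulVr a : a ** ginv a = gone G.
Proof.
have e : a ** ginv a = (ginv (ginv a) ** ginv a) ** (a ** ginv a).
  by rewrite gmulV gmul1.
rewrite e -gmulA (gmulA (ginv a) a) gmulV gmul1 gmulV //.
Qed.

Lemma gmulr1 a : a ** gone G = a.
Proof. by rewrite -(gmulV a) gmulA gmulVr gmul1. Qed.

Lemma ginvK a : ginv (ginv a) = a.
Proof.
by rewrite -[LHS]gmulr1 -(gmulV a) gmulA gmulV gmul1.
Qed.

Lemma ginv_uniq a b : a ** b = gone G -> a = ginv b.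
Proof. by move=> e; rewrite -[a]gmulr1 -(gmulVr b) gmulA e gmul1. Qed.

Lemma ginvM a b : ginv (a ** b) = ginv b ** ginv a.
Proof.
apply/esym/ginv_uniq.
by rewrite -!gmulA (gmulA (ginv a)) gmulV gmul1 gmulV.
Qed.

Lemma ginv_inj a b : ginv a = ginv b -> a = b.
Proof. by move=> e; rewrite -(ginvK a) e ginvK. Qed.

Lemma gsolve (t s u : G) : (t ** s = u) <-> (s = ginv t ** u).
Proof.
split=> [<-|->]; first by rewrite gmulA gmulV gmul1.
by rewrite gmulA gmulVr gmul1.
Qed.

End GroupFacts.
Section PA.
Variables (G : group) (X : choiceType) (D : G -> set X) (h : G -> X -> X).
Hypothesis Hpa : partial_action D h.
Hypothesis Hfr : free_action D h.

Lemma hD t x : D (ginv t) x -> D t (h t x).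
Proof. by case: Hpa => Hb _ _ _ _; case: (Hb t) => Hf _ _; apply: Hf. Qed.

Lemma hinv t x : D (ginv t) x -> h (ginv t) (h t x) = x.
Proof.
case: Hpa => _ HT H1 _ H5 Dx.
rewrite H5 // ?gmulV ?H1 // ginvK gmulV HT //.
Qed.

Lemma hD2 t s x : D (ginv t) x -> D s x -> D (gmul t s) (h t x).
Proof.
case: Hpa => _ _ _ H4 _ Dx Ds.
have : (h t @` (D (ginv t) `&` D s)) (h t x) by exists x.
by rewrite H4 => -[].
Qed.

Lemma hcomp t s x : D (ginv s) x -> D (gmul (ginv s) (ginv t)) x ->
  h t (h s x) = h (gmul t s) x.
Proof. by case: Hpa => _ _ _ _ H5; apply: H5. Qed.

Lemma huniq t t' x : D t x -> D t' x -> h (ginv t) x = h (ginv t') x -> t = t'.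
Proof.
move=> Dt Dt' e.
set a := ginv t; set b := ginv t'.
have Da : D (ginv a) x by rewrite /a ginvK.
have Db : D (ginv b) x by rewrite /b ginvK.
have Dya : D a (h a x) := hD Da.
have Dyb : D b (h a x) by rewrite e; apply: hD.
have Dab : D (gmul (ginv a) b) x.
  have := @hD2 (ginv a) b (h a x); rewrite ginvK hinv //; exact.
have := @hcomp (ginv b) a x Da; rewrite ginvK => /(_ Dab).
rewrite e hinv // => fx.
have c1 : gmul (ginv b) a = gone G.
  apply: (Hfr (x := x)) => //; rewrite ginvM ginvK //.
have : a = b.
  by move: c1 => /ginv_uniq /ginv_inj.
by move/ginv_inj.
Qed.

End PA.
Section Main.
Variables (K : fieldType) (G : group) (X : choiceType) (D : G -> set X) (h : G -> X -> X).
Hypothesis Hpa : partial_action D h.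
Hypothesis Hfr : free_action D h.

Definition Phi (f : X * X -> K) : G -> X -> K :=
  fun t x => if `[< D t x >] then f (x, h (ginv t) x) else 0.

Definition tau (p : X * X) : G :=
  xget (gone G) [set t | D t p.1 /\ p.2 = h (ginv t) p.1].

Lemma tauP x y t : D t x -> y = h (ginv t) x ->
  D (tau (x, y)) x /\ y = h (ginv (tau (x, y))) x.
Proof.
move=> Dt ey; rewrite /tau /=.
set P := [set t0 | D t0 x /\ y = h (ginv t0) x].
by apply: (@xgetI _ _ P t); split.
Qed.

Lemma tauE t x : D t x -> tau (x, h (ginv t) x) = t.
Proof.
move=> Dt; have [Dt' e] := tauP Dt (erefl _).
by apply: (huniq Hpa Hfr Dt' Dt); rewrite -e.
Qed.

Lemma Phi_skew f : F0R_elt D h f -> skew_elt D (Phi f).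
Proof.
move=> [Ffin Frel]; split.
  apply: (sub_finite_set (B := tau @` [set p | f p != 0])); last exact: finite_image.
  move=> t [x]; rewrite /Phi; case: asboolP => Dx; rewrite ?eqxx // => fx.
  by exists (x, h (ginv t) x) => //; apply: tauE.
move=> t; split.
  apply: (sub_finite_set (B := fst @` [set p | f p != 0])); last exact: finite_image.
  by move=> x /=; rewrite /Phi; case: asboolP => Dx; rewrite ?eqxx // => fx; exists (x, h (ginv t) x).
by move=> x; rewrite /Phi; case: asboolP => //; rewrite eqxx.
Qed.

Lemma Phi_inj f g : F0R_elt D h f -> F0R_elt D h g -> Phi f = Phi g -> f = g.
Proof.
move=> [_ Hf] [_ Hg] e; apply/funext => -[x y].
case: (pselect (Rel D h (x, y))) => [[t [/= Dx ->]] | nR].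
  have := congr1 (fun F => F (ginv t) x) e; rewrite /Phi ginvK asboolT //.
have -> : f (x, y) = 0 by apply/eqP; apply: contra_notT nR => /Hf.
have -> : g (x, y) = 0 by apply/eqP; apply: contra_notT nR => /Hg.
by [].
Qed.

Lemma Phi_surj a : skew_elt D a -> exists2 f, F0R_elt D h f & Phi f = a.
Proof.
move=> [Afin Aon].
pose f (p : X * X) := if `[< exists t, D t p.1 /\ p.2 = h (ginv t) p.1 >]
  then a (tau p) p.1 else 0.
exists f.
  split.
    apply: (sub_finite_set (B := (fun q : G * X => (q.2, h (ginv q.1) q.2)) @`
      ([set t | exists x, a t x != 0] `*`` (fun t => [set x | a t x != 0])))).
      move=> [x y] /=; rewrite /f /=; case: asboolP => [[t [Dt ey]]|_]; rewrite ?eqxx // => fx.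
      have [Dt' ey'] := tauP Dt ey.
      exists (tau (x, y), x) => //=; last by rewrite -ey'.
      by split => //; exists x.
    apply: finite_image; apply: finite_setXR => // t _; exact: (Aon t).1.
  move=> [x y]; rewrite /f /=; case: asboolP => [[t [Dt ey]]|_]; rewrite ?eqxx // => _.
  by exists (ginv t); rewrite ginvK.
apply/funext => t; apply/funext => x; rewrite /Phi /f /=.
case: asboolP => Dx.
  rewrite asboolT; last by exists t.
  by rewrite tauE.
by apply/esym/eqP; apply: contra_notT Dx => /(Aon t).2.
Qed.

Lemma Phi_add f g : Phi (F0R_add f g) = skew_add (Phi f) (Phi g).
Proof.
apply/funext => t; apply/funext => x; rewrite /Phi /skew_add /F0R_add.
by case: asboolP => //; rewrite addr0.
Qed.

Lemma Phi_scale k f : Phi (F0R_scale k f) = skew_scale k (Phi f).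
Proof.
apply/funext => t; apply/funext => x; rewrite /Phi /skew_scale /F0R_scale.
by case: asboolP => //; rewrite mulr0.
Qed.


Lemma termE f g u x t :
  alpha D h t (fun z => alpha D h (ginv t) (Phi f t) z * Phi g (gmul (ginv t) u) z) x
  = if `[< D t x >] then (if `[< D u x >] then
       f (x, h (ginv t) x) * g (h (ginv t) x, h (ginv u) x) else 0) else 0.
Proof.
rewrite {1}/alpha; case: (asboolP (D t x)) => Dt //.
have Dt' : D (ginv (ginv t)) x by rewrite ginvK.
set w := h (ginv t) x.
have Dw : D (ginv t) w by apply: (hD Hpa Dt').
have hw : h t w = x by have := hinv Hpa Dt'; rewrite ginvK.
rewrite /alpha ginvK asboolT // hw /Phi asboolT // -/w.
case: (asboolP (D u x)) => Du.
  have Ds : D (gmul (ginv t) u) w by apply: (hD2 Hpa Dt' Du).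
  rewrite asboolT //; congr (_ * g (w, _)).
  rewrite ginvM ginvK /w (hcomp Hpa) //; last by rewrite ginvM !ginvK gmulA gmulVr gmul1.
  by rewrite -gmulA gmulVr gmulr1.
rewrite asboolF ?mulr0 // => Ds; apply: Du.
by have := hD2 Hpa Dw Ds; rewrite hw gmulA gmulVr gmul1.
Qed.

Lemma Phi_mul f g : Phi (F0R_mul D h f g) = skew_mul D h (Phi f) (Phi g).
Proof.
apply/funext => u; apply/funext => x; rewrite /skew_mul.
have inner t : \sum_(s \in [set s | gmul t s = u])
    alpha D h t (fun z => alpha D h (ginv t) (Phi f t) z * Phi g s z) x
  = if `[< D t x >] then (if `[< D u x >] then
       f (x, h (ginv t) x) * g (h (ginv t) x, h (ginv u) x) else 0) else 0.
  have -> : [set s | gmul t s = u] = [set gmul (ginv t) u].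
    by apply/seteqP; split => s /= /gsolve.
  by rewrite fsbig_set1 termE.
under eq_fsbigr => t _ do rewrite inner.
rewrite /Phi; case: (asboolP (D u x)) => Du; last first.
  by apply/esym/fsbig1 => t _; case: ifP.
rewrite /F0R_mul asboolT /=; last by exists (ginv u); rewrite ginvK.
rewrite fsbig_mkcond (reindex_fsbigT (@ginv G)); last by exists (@ginv G) => ?; exact: ginvK.
apply: eq_fsbigr => t _; rewrite /patch.
case: (pselect (D t x)) => Dt.
  by rewrite mem_set /= ?ginvK // asboolT.
by rewrite memNset /= ?ginvK // asboolF.
Qed.

End Main.

Theorem mainTheorem10 (K : fieldType) (G : group) (X : choiceType)
    (D : G -> set X) (h : G -> X -> X) :
  partial_action D h -> free_action D h ->
  exists Phi : (X * X -> K) -> (G -> X -> K),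
    (forall f, F0R_elt D h f -> skew_elt D (Phi f)) /\
    (forall f g, F0R_elt D h f -> F0R_elt D h g -> Phi f = Phi g -> f = g) /\
    (forall a, skew_elt D a -> exists2 f, F0R_elt D h f & Phi f = a) /\
    (forall f g, F0R_elt D h f -> F0R_elt D h g ->
       Phi (F0R_add f g) = skew_add (Phi f) (Phi g)) /\
    (forall (k : K) f, F0R_elt D h f ->
       Phi (F0R_scale k f) = skew_scale k (Phi f)) /\
    (forall f g, F0R_elt D h f -> F0R_elt D h g ->
       Phi (F0R_mul D h f g) = skew_mul D h (Phi f) (Phi g)).
Proof.
move=> Hpa Hfr; exists (@Phi K G X D h).
split; first exact: Phi_skew.
split; first exact: Phi_inj.
split; first exact: (Phi_surj Hpa Hfr).
split; first by move=> f g _ _; exact: Phi_add.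
split; first by move=> k f _; exact: Phi_scale.
by move=> f g _ _; exact: (Phi_mul Hpa).
Qed.
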